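(* Let $n=2$ and suppose both agents are strategic and have complete and perfect information. For any categorial sequential allocation mechanism $f_\mathcal O$ (with any number $p$ of categories), there exists a profile $P$ such that for $j=1,2$, the rank (in $R_j$) of the bundle allocated to agent $j$ in the subgame-perfect Nash equilibrium is exactly $n^p+1-\prod_{i=1}^{p}k_{j,i}$.
   Context: Basic categorized domain: $n$ agents, $p$ categories $D_i=\{1,\ldots,n\}$ of indivisible items, bundles $\mathfrak D=D_1\times\cdots\times D_p$; each agent $j$ has a linear order $R_j$ over $\mathfrak D$; a profile is $(R_1,\ldots,R_n)$. The rank of a bundle in $R_j$ is its position (top $=1$, bottom $=n^p$). CSAM $f_\mathcal O$: given a linear order $\mathcal O$ over $\{1,\ldots,n\}\times\{1,\ldots,p\}$, in rounds $t=1,\ldots,np$, if the $t$-th element of $\mathcal O$ is $(j,i)$ then agent $j$ chooses an item $d_{j,i}$ from the items of $D_i$ not yet chosen; all choices are observed by all agents; agent $j$ finally receives $(d_{j,1},\ldots,d_{j,p})$. With strategic agents with complete and perfect information, this is an extensive-form game in which each agent's preference over outcomes is her linear order over her final bundle; its subgame-perfect Nash equilibrium is unique. $k_{j,i}$ denotes the number of items of $D_i$ still available right before agent $j$ chooses from $D_i$, i.e. $n$ minus the number of agents who choose from $D_i$ before $j$ in $\mathcal O$. *)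

(* Defs.v *)
From mathcomp Require Import all_boot all_order.
Set Implicit Arguments. Unset Strict Implicit. Unset Printing Implicit Defensive.

(* Basic categorized domain with n agents and p categories.
   Agents are 'I_n, categories are 'I_p, and the items of every category D_i
   are 'I_n (i.e. {1,...,n} shifted to {0,...,n-1}). *)

Definition bundle (n p : nat) := {ffun 'I_p -> 'I_n}.

(* A (weak-form) linear order over bundles: [R x y] means x is ranked at or
   above y in R. *)
Definition linear_order (T : finType) (R : rel T) : Prop :=
  [/\ reflexive R, antisymmetric R, transitive R & total R].

(* Rank of b in R: its position, top = 1, bottom = #|T|. *)
Definition rank (T : finType) (R : rel T) (b : T) : nat := #|[pred y | R y b]|.

(* A CSAM order O: a linear order over agents x categories, given as the
   sequence listing all pairs (j,i) exactly once. *)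
Definition valid_order (n p : nat) (O : seq ('I_n * 'I_p)) : Prop :=
  uniq O /\ forall x : 'I_n * 'I_p, x \in O.

(* k_{j,i}: number of items of D_i still available right before agent j
   chooses from D_i. *)
Definition kji (n p : nat) (O : seq ('I_n * 'I_p)) (j : 'I_n) (i : 'I_p) : nat :=
  n - count (fun x : 'I_n * 'I_p => x.2 == i) (take (index (j, i) O) O).

(* A history: the sequence of choices (agent, category, item) made so far. *)
Definition history (n p : nat) := seq ('I_n * 'I_p * 'I_n).

Definition avail (n p : nat) (h : history n p) (i : 'I_p) : seq 'I_n :=
  [seq d <- enum 'I_n | ~~ has (fun e : 'I_n * 'I_p * 'I_n => (e.1.2 == i) && (e.2 == d)) h].

(* The bundle agent j holds at the end of a (complete) history h; the
   default value (j itself, seen as an item) is irrelevant for complete plays. *)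
Definition bundle_of (n p : nat) (h : history n p) (j : 'I_n) : bundle n p :=
  [ffun i => odflt j
     (ohead [seq e.2 | e <- h & (e.1.1 == j) && (e.1.2 == i)])].

(* Among candidate final histories, the one whose bundle for agent j is
   best according to R (strict preferences make it unique). *)
Definition best (n p : nat) (R : rel (bundle n p)) (j : 'I_n)
    (dflt : history n p) (cands : seq (history n p)) : history n p :=
  foldl (fun b c => if R (bundle_of c j) (bundle_of b j) then c else b)
        (head dflt cands) cands.

(* Backward induction on the extensive-form game of the CSAM with remaining
   moves [moves] from history [h]: returns the final history of the
   subgame-perfect equilibrium play. *)
Fixpoint bi (n p : nat) (P : 'I_n -> rel (bundle n p))
    (moves : seq ('I_n * 'I_p)) (h : history n p) : history n p :=
  match moves with
  | [::] => h
  | (j, i) :: ms =>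
      best (P j) j h [seq bi P ms (rcons h (j, i, d)) | d <- avail h i]
  end.

Definition spne_history (n p : nat) (P : 'I_n -> rel (bundle n p))
    (O : seq ('I_n * 'I_p)) : history n p := bi P O [::].

(* Main.v *)
Require Import Defs.
From mathcomp Require Import all_boot all_order.
From mathcomp Require Import zify.
Set Implicit Arguments. Unset Strict Implicit. Unset Printing Implicit Defensive.


Fixpoint gr2 p (ms : seq ('I_2 * 'I_p)) (h : history 2 p) : history 2 p :=
  match ms with
  | [::] => h
  | (j, i) :: ms' => gr2 ms' (rcons h (j, i, head ord0 (avail h i)))
  end.

Lemma gr2_prefix p (ms : seq ('I_2 * 'I_p)) h : exists r, gr2 ms h = h ++ r.
Proof.
elim: ms h => [|[j i] ms IH] h /=; first by exists [::]; rewrite cats0.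
have [r ->] := IH (rcons h (j, i, head ord0 (avail h i))).
by exists ((j, i, head ord0 (avail h i)) :: r); rewrite cat_rcons.
Qed.

Lemma avail_filter p (i i' : 'I_p) (h : history 2 p) : i' != i ->
  avail h i' = avail [seq e <- h | e.1.2 != i] i'.
Proof.
move=> Hi; rewrite /avail; apply: eq_filter => d; congr negb.
elim: h => //= e h IH; case: (e.1.2 =P i) => He /=.
  by rewrite He eq_sym (negbTE Hi) /= IH.
by rewrite IH.
Qed.

Lemma gr2_filter p (i : 'I_p) ms (h h' : history 2 p) :
  [seq e <- h | e.1.2 != i] = [seq e <- h' | e.1.2 != i] ->
  [seq e <- gr2 ms h | e.1.2 != i] = [seq e <- gr2 ms h' | e.1.2 != i].
Proof.
elim: ms h h' => [|[j i'] ms IH] h h' //= Hh; apply: IH.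
rewrite -!cats1 !filter_cat Hh /=.
case: (i' =P i) => [->|/eqP Hi] //=.
by rewrite (avail_filter h Hi) (avail_filter h' Hi) Hh.
Qed.

Lemma bundle_filter p (i i' : 'I_p) j (h : history 2 p) : i' != i ->
  bundle_of h j i' = bundle_of [seq e <- h | e.1.2 != i] j i'.
Proof.
move=> Hi; rewrite /bundle_of !ffunE; congr (odflt _ (ohead _)).
elim: h => //= e h IH; case: (e.1.2 =P i) => He /=.
  have Hi' : (i == i') = false by rewrite eq_sym (negbTE Hi).
  by rewrite He Hi' andbF /= IH.
by case: ifP => _ /=; rewrite IH.
Qed.

Lemma bundle_new p j (i : 'I_p) d (h r : history 2 p) :
  (j, i) \notin map fst h -> bundle_of (rcons h (j, i, d) ++ r) j i = d.
Proof.
move=> Hn; rewrite /bundle_of ffunE -cats1 -catA filter_cat.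
have -> : [seq e <- h | (e.1.1 == j) && (e.1.2 == i)] = [::].
  elim: h Hn => //= e h IH; rewrite inE negb_or => /andP [H1 H2].
  rewrite IH //; case: e H1 => [[a b] c] /= H1; case: ifP => // /andP [/eqP Ha /eqP Hb].
  by rewrite Ha Hb eqxx in H1.
by rewrite /= !eqxx.
Qed.

Lemma ord2 (a : 'I_2) : a = ord0 \/ a = ord_max.
Proof. case: a => [[|[|m]] Hm]; [left|right|by []]; exact: val_inj. Qed.

Lemma enum2 : enum 'I_2 = [:: ord0; ord_max].
Proof. by apply: (inj_map val_inj); rewrite val_enum_ord. Qed.

Lemma cat_le2 p (O : seq ('I_2 * 'I_p)) (i : 'I_p) :
  uniq O -> count (fun x => x.2 == i) O <= 2.
Proof.
move=> uO; rewrite -size_filter.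
apply: (uniq_leq_size (s2 := [:: (ord0, i); (ord_max, i)])); first exact: filter_uniq.
move=> [a b]; rewrite mem_filter /= => /andP [/eqP -> _].
by rewrite !inE !xpair_eqE eqxx !andbT; case: (ord2 a) => ->; rewrite eqxx ?orbT.
Qed.

Lemma kji_at p (O : seq ('I_2 * 'I_p)) s x ms :
  uniq O -> s ++ x :: ms = O ->
  kji O x.1 x.2 = 2 - count (fun y => y.2 == x.2) s /\
  count (fun y => y.2 == x.2) s <= 1.
Proof.
move=> uO HO; have := uO; rewrite -HO cat_uniq /= => /and4P [_ Hx _ _].
have Hxs : x \notin s by apply: contra Hx => H; rewrite H.
split.
  case: x HO Hxs {Hx} => j i HO Hxs /=.
  by rewrite /kji index_cat (negbTE Hxs) /= eqxx addn0 take_size_cat.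
have := cat_le2 x.2 uO; rewrite -HO count_cat /= eqxx.
  move=> H; apply: leq_trans (leq_addr (count (fun y => y.2 == x.2) ms) _) _; rewrite -ltnS; apply: leq_trans H; rewrite add1n addnS. exact: ltnSn.
Qed.

Lemma avail_cases p (h : history 2 p) (i : 'I_p) :
  count (fun e => e.1.2 == i) h <= 1 ->
  [\/ avail h i = [:: ord0; ord_max] /\ count (fun e => e.1.2 == i) h = 0,
      avail h i = [:: ord0] /\ has (fun e => (e.1.2 == i) && (e.2 == ord_max)) h
    | avail h i = [:: ord_max] /\ 0 < count (fun e => e.1.2 == i) h].
Proof.
move=> Hc; rewrite /avail enum2 /=.
set a := (fun e : 'I_2 * 'I_p * 'I_2 => (e.1.2 == i) && (e.2 == ord0)).
set b := (fun e : 'I_2 * 'I_p * 'I_2 => (e.1.2 == i) && (e.2 == ord_max)).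
case Ha: (has a h); case Hb: (has b h) => /=.
- exfalso; move: Hc; apply/negP; rewrite -ltnNge.
  have Hab : count (predI a b) h = 0.
    apply/eqP; rewrite -leqn0 leqNgt -has_count; apply/hasPn => e _.
    by rewrite /= /a /b; case: (ord2 e.2) => ->; case: (e.1.2 == i).
  have := count_predUI a b h; rewrite Hab addn0 => H.
  apply: (@leq_trans (count (predU a b) h)).
    by rewrite H; move: Ha Hb; rewrite !has_count; case: (count a h) => // n _; case: (count b h) => // m _; rewrite addSn ltnS addnS.
  by apply: (sub_count (a1 := predU a b)) => e; rewrite /= /a /b; case: (e.1.2 == i).
- apply: Or33; split => //; rewrite -has_count; apply: sub_has Ha => e; rewrite /a; case/andP => //.
- by apply: Or32.
- apply: Or31; split => //; apply/eqP; rewrite -leqn0 leqNgt -has_count; apply/hasPn => e He.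
  apply/negP => /eqP Hi; case: (ord2 e.2) => He2.
    by move/hasPn: Ha => /(_ e He); rewrite /a Hi He2 !eqxx.
  by move/hasPn: Hb => /(_ e He); rewrite /b Hi He2 !eqxx.
Qed.

Definition first p (O : seq ('I_2 * 'I_p)) (j : 'I_2) (i : 'I_p) := kji O j i == 2.
Definition inF p (O : seq ('I_2 * 'I_p)) j (y : bundle 2 p) : bool :=
  [forall i, first O j i || (y i == ord_max)].
Definition vv p (O : seq ('I_2 * 'I_p)) j (y : bundle 2 p) : nat :=
  p.+1 * (~~ inF O j y) + \sum_(i < p) (first O j i && (y i == ord0)).
Definition key p (O : seq ('I_2 * 'I_p)) j (y : bundle 2 p) : nat :=
  vv O j y * #|{: {ffun 'I_p -> 'I_2}}| + enum_rank (y : {ffun 'I_p -> 'I_2}).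
Definition prof p (O : seq ('I_2 * 'I_p)) : 'I_2 -> rel (bundle 2 p) :=
  fun j y z => key O j z <= key O j y.

Lemma key_lt p (O : seq ('I_2 * 'I_p)) j y z : vv O j y < vv O j z -> key O j y < key O j z.
Proof.
move=> H; rewrite /key; set N := #|_|.
apply: (@leq_trans ((vv O j y).+1 * N)).
  by rewrite mulSn addnC ltn_add2r ltn_ord.
by apply: leq_trans (leq_addr _ _); rewrite leq_mul2r H orbT.
Qed.

Lemma key_inj p (O : seq ('I_2 * 'I_p)) j y z : key O j y = key O j z -> y = z.
Proof.
rewrite /key => H; apply: enum_rank_inj; apply: val_inj.
have := congr1 (modn^~ #|{: {ffun 'I_p -> 'I_2}}|) H.
by rewrite !modnMDl !modn_small ?ltn_ord.
Qed.

Lemma prof_lo p (O : seq ('I_2 * 'I_p)) j : linear_order (prof O j).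
Proof.
split.
- by move=> y; rewrite /prof.
- by move=> y z /andP [H1 H2]; apply: (key_inj (O := O) (j := j)); apply/eqP; rewrite eqn_leq; apply/andP; split.
- by move=> y x z H1 H2; rewrite /prof; apply: leq_trans H2 H1.
- by move=> y z; rewrite /prof leq_total.
Qed.

Lemma vv_step p (O : seq ('I_2 * 'I_p)) j i (y z : bundle 2 p) :
  first O j i -> y i = ord0 -> z i = ord_max -> (forall i', i' != i -> y i' = z i') ->
  vv O j z < vv O j y.
Proof.
move=> Hf Hy Hz He; rewrite /vv.
have -> : inF O j y = inF O j z.
  apply: eq_forallb => i'; case: (i' =P i) => [->|/eqP Hi]; first by rewrite Hf.
  by rewrite He.
rewrite ltn_add2l [X in _ < X](bigD1 i) //= [X in X < _](bigD1 i) //= Hf Hy Hz /= add1n add0n ltnS.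
by rewrite leq_eqVlt; apply/orP; left; apply/eqP; apply: eq_bigr => i' Hi; rewrite He.
Qed.

Lemma bi_gr2 p (O : seq ('I_2 * 'I_p)) : uniq O ->
  forall ms (h : history 2 p), map fst h ++ ms = O -> bi (prof O) ms h = gr2 ms h.
Proof.
move=> uO; elim=> [|[j i] ms IH] h HO //=.
have [Hk Hc] := kji_at uO HO; rewrite /= count_map in Hk Hc.
have Hn : (j, i) \notin map fst h.
  by move: uO; rewrite -HO cat_uniq /= => /and4P [_ Hx _ _]; apply: contra Hx => ->.
have IH' : forall d, bi (prof O) ms (rcons h (j, i, d)) = gr2 ms (rcons h (j, i, d)).
  by move=> d; apply: IH; rewrite map_rcons cat_rcons.
rewrite /best.
case: (avail_cases Hc) => [[-> Hc0]|[-> _]|[-> _]] /=; rewrite ?IH'; last 2 first.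
- by case: ifP.
- by case: ifP.
rewrite if_same.
have Hf : first O j i by rewrite /first Hk /= Hc0.
have [r0 E0] := gr2_prefix ms (rcons h (j, i, ord0)).
have [r1 E1] := gr2_prefix ms (rcons h (j, i, ord_max)).
set c0 := gr2 ms (rcons h (j, i, ord0)) in E0 *.
set c1 := gr2 ms (rcons h (j, i, ord_max)) in E1 *.
suff -> : prof O j (bundle_of c1 j) (bundle_of c0 j) = false by [].
apply/negbTE; rewrite /prof -ltnNge; apply: key_lt; apply: (vv_step Hf).
- by rewrite E0 bundle_new.
- by rewrite E1 bundle_new.
move=> i' Hi; rewrite (bundle_filter j c0 Hi) (bundle_filter j c1 Hi).
congr (bundle_of _ _ _); apply: gr2_filter.
by rewrite -!cats1 !filter_cat /= eqxx.
Qed.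

Definition ex p (O : seq ('I_2 * 'I_p)) (x : 'I_2 * 'I_p) : 'I_2 :=
  if first O x.1 x.2 then ord0 else ord_max.

Lemma gr2_path p (O : seq ('I_2 * 'I_p)) : uniq O ->
  forall ms (h : history 2 p), map fst h ++ ms = O ->
  h = [seq (x, ex O x) | x <- map fst h] ->
  gr2 ms h = [seq (x, ex O x) | x <- O].
Proof.
move=> uO; elim=> [|[j i] ms IH] h HO Hh /=.
  by rewrite Hh -HO cats0.
have [Hk Hc] := kji_at uO HO; rewrite /= in Hk Hc.
have Hc' := Hc; rewrite count_map in Hc'.
suff Hd : head ord0 (avail h i) = ex O (j, i).
  apply: IH; first by rewrite map_rcons cat_rcons.
  by rewrite Hd !map_rcons -Hh.
case: (avail_cases Hc') => [[-> Hc0]|[-> Hb]|[-> Hc0]] /=.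
- by rewrite /ex /first /= Hk (_ : count _ _ = 0) // count_map; exact: Hc0.
- exfalso; case/hasP: Hb => e He /andP [/eqP Hei /eqP Hem].
  rewrite Hh in He; case/mapP: He => z Hz Ez.
  rewrite Ez /= in Hei Hem.
  case/splitPr: Hz HO Hc => s1 s2 HO Hc.
  have HO' : s1 ++ z :: (s2 ++ (j, i) :: ms) = O by rewrite -HO -catA.
  have [Hkz _] := kji_at uO HO'.
  move: Hc; rewrite count_cat /= Hei eqxx /= add1n addnS ltnS leqn0 addn_eq0 => /andP [/eqP H0 _].
  by move: Hem; rewrite /ex /first Hkz Hei H0 eqxx.
- rewrite /ex /first /= Hk count_map; move: Hc0.
  by case: (count _ h) => // n _; rewrite subSS; case: n.
Qed.

Lemma card_fam p (F : 'I_p -> pred 'I_2) :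
  #|[pred y : {ffun 'I_p -> 'I_2} | [forall i, y i \in F i]]| = \prod_(i < p) #|F i|.
Proof.
have := card_family F. rewrite foldrE big_map big_enum /= => <-.
by apply: eq_card => y; rewrite !inE.
Qed.

Unset Implicit Arguments.
Theorem proposition7 (p : nat) (O : seq ('I_2 * 'I_p)) :
  valid_order O ->
  exists P : 'I_2 -> rel (bundle 2 p),
    (forall j, linear_order (P j)) /\
    (forall j : 'I_2,
       rank (P j) (bundle_of (spne_history P O) j)
       = 2 ^ p + 1 - \prod_(i < p) kji O j i).
Proof.
move=> [uO allO]; exists (prof O); split; first exact: prof_lo.
move=> j.
have Hsp : spne_history (prof O) O = [seq (x, ex O x) | x <- O].
  rewrite /spne_history (bi_gr2 uO (h := [::])) //.
  exact: (gr2_path uO (ms := O) (h := [::])).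
rewrite Hsp; set b := bundle_of _ j.
have Hb : forall i, b i = ex O (j, i).
  move=> i; rewrite /b /bundle_of ffunE filter_map.
  have -> : [seq x <- O | preim (fun x => (x, ex O x))
               (fun e => (e.1.1 == j) && (e.1.2 == i)) x] = [:: (j, i)].
    rewrite -(filter_pred1_uniq uO (allO (j, i))); apply: eq_filter => [[a c]] /=.
    by rewrite xpair_eqE.
  by [].
have HbF : inF O j b by apply/forallP => i; rewrite Hb /ex /=; case: first.
have Hkey : forall y, prof O j y b = (y == b) || ~~ inF O j y.
  move=> y; rewrite /prof; case: (y =P b) => [->|Hne] /=; first exact: leqnn.
  case Hy: (inF O j y) => /=.
  - apply/negbTE; rewrite -ltnNge; apply: key_lt.
    case: (pickP (fun i => y i != b i)) => [i Hi|H]; last first.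
      by case: Hne; apply/ffunP => i; move: (H i) => /negbFE/eqP.
    have Hfi : first O j i.
      move: Hi; rewrite Hb /ex; case Hf: (first O j i) => //.
      by move/forallP: Hy => /(_ i); rewrite Hf /= => /eqP ->; rewrite eqxx.
    rewrite /vv Hy HbF /= !muln0 !add0n.
    rewrite [X in _ < X](bigD1 i) // [X in X < _](bigD1 i) //=.
    move: Hi; rewrite Hb /ex Hfi /= => /negbTE -> /=; rewrite add0n add1n ltnS.
    apply: leq_sum => i' _; rewrite Hb /ex; case: (first O j i') => //=.
    exact: leq_b1.
  - apply: ltnW; apply: key_lt; rewrite /vv Hy HbF /= muln0 muln1 add0n.
    apply: (@leq_trans p.+1); last exact: leq_addr.
    rewrite ltnS; apply: (@leq_trans (\sum_(i < p) 1)); first by apply: leq_sum => i _; exact: leq_b1.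
    by rewrite sum_nat_const card_ord muln1.
rewrite /rank.
have -> : #|[pred y | prof O j y b]| = #|[predU1 b & [predC inF O j]]|.
  by apply: eq_card => y; rewrite !inE Hkey.
rewrite cardU1 (_ : b \notin _ = true); last by rewrite !inE negbK; exact: HbF.
have HC := cardC (inF O j).
have HT : #|{: bundle 2 p}| = 2 ^ p by rewrite card_ffun !card_ord.
have HF : #|inF O j| = \prod_(i < p) kji O j i.
  transitivity #|[pred y : {ffun 'I_p -> 'I_2} | [forall i, y i \in
     [pred d : 'I_2 | first O j i || (d == ord_max)]]]|.
    by apply: eq_card => y; rewrite !inE.
  rewrite card_fam; apply: eq_bigr => i _.
  have [s1 [s2 HO]] : exists s1 s2, O = s1 ++ (j, i) :: s2.
    by case/splitPr: (allO (j, i)) => s1 s2; exists s1, s2.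
  have [Hk Hc] := kji_at uO (esym HO); rewrite /= in Hk Hc.
  case Hf: (first O j i).
    rewrite (eq_card (B := predT)); last by move=> d; rewrite !inE.
    by rewrite cardT enum2; move/eqP: Hf.
  rewrite (eq_card (B := pred1 ord_max)); last by move=> d; rewrite !inE.
  rewrite card1 Hk; move: Hf; rewrite /first Hk.
  by case: (count _ s1) Hc => // [[|n]].
have Hpos : 0 < #|inF O j| by apply/card_gt0P; exists b.
rewrite HT in HC; rewrite -HF -HC -addnA addKn addn1 add1n; congr S; exact: eq_card.
Qed.
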